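(* Let $k_1,\dots,k_d$ be distinct elements of $[n-1]$ and let $k=\min\{k_1,\dots,k_d\}$. If there is a chain $(w=v_1,v_2,\dots,v_{d+1}=w_0)$ compatible with $(k_1,\dots,k_d)$, then $w(i)=n+1-i$ for all $i\in[k-1]$.
   Context: Permutations in one-line notation; $w_0=[n,\dots,1]$; $wt_{i,j}$ is $w$ with positions $i<j$ swapped; $\ell$ the number of inversions. $u\lessdot w$ iff $w=ut_{i,j}$, $i<j$, $\ell(w)=\ell(u)+1$; $u\lessdot_k w$ iff moreover $i\le k<j$. A $k$-chain $v_1\lessdot_k\cdots\lessdot_k v_m$ ($m\ge1$) is increasing if the smaller of the two values exchanged at each step strictly increases along the chain. $(v_1,\dots,v_{d+1})$ is compatible with $(k_1,\dots,k_d)$ if for each $s$ there is an increasing $k_s$-chain from $v_s$ to $v_{s+1}$. *)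

(* Defs.v *)
(* Permutations of [n] are 'S_n = {perm 'I_n}.
   Convention: position p in {1..n} is the ordinal i with i.+1 = p, and the
   one-line value w(p) is (w i).+1 (ordinals are 0-based). *)
From mathcomp Require Import all_boot all_order all_fingroup.
Set Implicit Arguments. Unset Strict Implicit. Unset Printing Implicit Defensive.

Section Perms.
Variable n : nat.

Definition ell (w : 'S_n) : nat :=
  #|[set p : 'I_n * 'I_n | (p.1 < p.2) && (w p.2 < w p.1)]|.

(* w t_{i,j} : w with positions i and j swapped; (swap w i j) x = w (tperm i j x) *)
Definition swap (w : 'S_n) (i j : 'I_n) : 'S_n := (tperm i j * w)%g.

Definition w0 : 'S_n := perm (@rev_ord_inj n).

Definition kcover_at (k : nat) (u w : 'S_n) (i j : 'I_n) : Prop :=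
  [/\ i < j, w = swap u i j, ell w = (ell u).+1 & i.+1 <= k < j.+1].

Definition label (u : 'S_n) (i j : 'I_n) : nat := minn (u i).+1 (u j).+1.

Fixpoint inc_kchain_from (k : nat) (v : 'S_n) (lo : nat)
    (p : seq ('I_n * 'I_n)) (v' : 'S_n) : Prop :=
  match p with
  | [::] => v = v'
  | (i, j) :: p' =>
      kcover_at k v (swap v i j) i j /\ lo <= label v i j /\
      inc_kchain_from k (swap v i j) (label v i j).+1 p' v'
  end.

Definition inc_kchain (k : nat) (v v' : 'S_n) : Prop :=
  exists p : seq ('I_n * 'I_n), inc_kchain_from k v 0 p v'.

Definition compatible (vs : seq 'S_n) (ks : seq nat) : Prop :=
  size vs = (size ks).+1 /\
  forall s, s < size ks ->
    inc_kchain (nth 0 ks s) (nth 1%g vs s) (nth 1%g vs s.+1).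

End Perms.

(* Main.v *)
Require Import Defs.
From mathcomp Require Import all_boot all_order all_fingroup.
From mathcomp Require Import zify.
Set Implicit Arguments. Unset Strict Implicit. Unset Printing Implicit Defensive.

Definition invs n (u : 'S_n) :=
  [set p : 'I_n * 'I_n | (p.1 < p.2) && (u p.2 < u p.1)].
Lemma ellE n (u : 'S_n) : ell u = #|invs u|. Proof. by []. Qed.
Lemma swapE n (u : 'S_n) a b x : swap u a b x = u (tperm a b x).
Proof. by rewrite /swap permM. Qed.

Definition hmap n (a b : 'I_n) (pq : 'I_n * 'I_n) :=
  if tperm a b pq.1 < tperm a b pq.2 then (tperm a b pq.1, tperm a b pq.2) else pq.

Lemma hmap_inj n (a b : 'I_n) (A : {set 'I_n * 'I_n}) :
  (forall pq, pq \in A -> pq.1 < pq.2) -> {in A &, injective (hmap a b)}.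
Proof.
move=> hA [p q] [p' q'] /hA /= l1 /hA /= l2; rewrite /hmap /=.
case: ifP => h1; case: ifP => h2 [e1 e2].
- by rewrite (perm_inj e1) (perm_inj e2).
- by move: h2; rewrite -e1 -e2 !tpermK l1.
- by move: h1; rewrite e1 e2 !tpermK l2.
- by rewrite e1 e2.
Qed.

Lemma neq_val n (u : 'S_n) x y : x != y -> (u x : nat) != u y.
Proof. by move=> h; apply/eqP => /val_inj /perm_inj e; rewrite e eqxx in h. Qed.


Lemma ordneq n (x y : 'I_n) : x <> y -> nat_of_ord x <> nat_of_ord y.
Proof. by move=> h e; apply: h; apply: ord_inj. Qed.
Lemma ordeq n (x y : 'I_n) : x = y -> nat_of_ord x = nat_of_ord y.
Proof. by move=> ->. Qed.
Ltac ordfin := intros; apply/and3P; split;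
  [rewrite xpair_eqE; apply/negP => /andP [/eqP /ordeq ? /eqP /ordeq ?]; lia | lia | lia].

Lemma cover_lt n (u : 'S_n) (a b : 'I_n) :
  a < b -> ell (swap u a b) = (ell u).+1 -> u a < u b.
Proof.
move=> ab hl.
have nab : a != b by apply/eqP => e; rewrite e ltnn in ab.
have := neq_val u nab; rewrite neq_ltn => /orP [//|hba].
have sub : hmap a b @: invs (swap u a b) \subset invs u :\ (a, b).
{ apply/subsetP => _ /imsetP [[p q] hpq ->].
  move: hpq; rewrite !inE /= !swapE /hmap /= => /andP [pq hw].
  case: ifP => pres.
    rewrite /= pres hw /=; apply/andP; split => //; apply/negP => /eqP [e1 e2].
    by move: pq; rewrite -(tpermK a b p) -(tpermK a b q) e1 e2 tpermL tpermR; lia.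
  move: pres hw pq; case: tpermP => [->|->|/ordneq hpa /ordneq hpb]; case: tpermP => [->|->|/ordneq hqa /ordneq hqb].
  all: rewrite ?ltnn ?ab //=; try lia.
  all: ordfin. }
have hab : (a, b) \in invs u by rewrite inE /= ab hba.
have := subset_leq_card sub.
rewrite card_in_imset; last by apply: hmap_inj => pq; rewrite inE => /andP [].
have hc := cardsD1 (a, b) (invs u); rewrite hab -ellE in hc.
rewrite -ellE; lia.
Qed.

Ltac fin1 := first [lia | (exfalso; lia) | (rewrite xpair_eqE; apply/negP => /andP [/eqP e1 /eqP e2]; have := ordeq e1; have := ordeq e2; try subst; intros; lia)].
Ltac ordfin2 := intros; repeat (apply/andP; split); fin1.

Lemma cover_nomid n (u : 'S_n) (a b c : 'I_n) :
  a < b -> ell (swap u a b) = (ell u).+1 -> a < c < b -> ~~ (u a < u c < u b).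
Proof.
move=> ab hl /andP [ac cb]; apply/negP => /andP [hac hcb].
have sub : hmap a b @: invs u \subset invs (swap u a b) :\ (a, b) :\ (a, c) :\ (c, b).
{ apply/subsetP => _ /imsetP [[p q] hpq ->].
  move: hpq; rewrite !inE /= /hmap /= => /andP [pq hw].
  case: ifP => pres.
    rewrite /= !swapE !tpermK pres hw /= andbT.
    move: pres pq hw; case: tpermP => [->|->|/ordneq hpa /ordneq hpb]; case: tpermP => [->|->|/ordneq hqa /ordneq hqb]; ordfin2.
  rewrite /= !swapE.
  move: pres hw pq; case: tpermP => [->|->|/ordneq hpa /ordneq hpb]; case: tpermP => [->|->|/ordneq hqa /ordneq hqb].
  all: rewrite ?tpermL ?tpermR ?ltnn ?ab //=; ordfin2. }
have nca : a != c by apply/eqP => e; rewrite e ltnn in ac.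
have ncb : b != c by apply/eqP => e; rewrite e ltnn in cb.
have tc : tperm a b c = c by rewrite tpermD.
have neq1 : (a, c) != (a, b) by rewrite xpair_eqE; apply/negP => /andP [_ /eqP e]; rewrite e eqxx in ncb.
have neq2 : (c, b) != (a, c) by rewrite xpair_eqE; apply/negP => /andP [/eqP e _]; rewrite e eqxx in nca.
have neq3 : (c, b) != (a, b) by rewrite xpair_eqE; apply/negP => /andP [/eqP e _]; rewrite e eqxx in nca.
have m1 : (a, b) \in invs (swap u a b).
  by rewrite inE /= !swapE tpermL tpermR ab /=; lia.
have m2 : (a, c) \in invs (swap u a b) :\ (a, b).
  by rewrite !inE /= !swapE tpermL tc neq1 ac /=.
have m3 : (c, b) \in invs (swap u a b) :\ (a, b) :\ (a, c).
  by rewrite !inE /= !swapE tpermR tc neq2 neq3 cb /=.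
have h1 := cardsD1 (a, b) (invs (swap u a b)); rewrite m1 in h1.
have h2 := cardsD1 (a, c) (invs (swap u a b) :\ (a, b)); rewrite m2 in h2.
have h3 := cardsD1 (c, b) (invs (swap u a b) :\ (a, b) :\ (a, c)); rewrite m3 in h3.
have := subset_leq_card sub.
rewrite card_in_imset; last by apply: hmap_inj => pq; rewrite inE => /andP [].
rewrite -!ellE in h1 *; lia.
Qed.


Definition rlmax n (u : 'S_n) (i : 'I_n) := forall x : 'I_n, i < x -> u x < u i.

Lemma neqn n (x y : 'I_n) : x != y -> (x : nat) != y.
Proof. by []. Qed.

Lemma frozen n k (u v : 'S_n) lo p (b jj : 'I_n) (y : nat) :
  inc_kchain_from k u lo p v -> k <= b -> jj < k -> u b = y :> nat ->
  u jj < y -> y.+2 <= lo -> v b = y :> nat /\ v jj < y.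
Proof.
elim: p u lo => [|[a' b'] p IH] u lo /=; first by move=> <-.
move=> [[ab' _ hl /andP [ak kb]] [hlo hch]] hb hj hub hjj hy.
have hlt := cover_lt ab' hl.
have lab : label u a' b' = (u a').+1 by rewrite /label; lia.
rewrite lab in hlo hch.
have hya : y < u a' by lia.
have n1 : a' != b by apply/eqP => e; move: hya; rewrite e; lia.
have n2 : b' != b by apply/eqP => e; move: hya hlt; rewrite e; lia.
have n3 : a' != jj by apply/eqP => e; move: hya hjj; rewrite e; lia.
have n4 : b' != jj by apply/eqP => e; move: hj kb; rewrite -e; lia.
apply: (IH _ _ hch) => //; rewrite ?swapE ?tpermD //; lia.
Qed.

Lemma main_chain n k (u v : 'S_n) lo p (jo i : 'I_n) :
  inc_kchain_from k u lo p v -> jo.+1 = k -> rlmax v jo -> rlmax v i ->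
  i != jo -> rlmax u i.
Proof.
elim: p u lo => [|[a b] p IH] u lo /=; first by move=> <-.
move=> [[ab _ hl /andP [ak kb]] [hlo hch]] hjo hvj hvi nij.
have IHu := IH _ _ hch hjo hvj hvi nij.
have hlt := cover_lt ab hl.
have hmid := cover_nomid ab hl.
have lab : label u a b = (u a).+1 by rewrite /label; lia.
rewrite lab in hch.
move=> x ix.
case: (eqVneq i a) => [eia|nia].
  exfalso; subst i.
  have nij' := neqn nij.
  have aj : a < jo by lia.
  have jb : jo < b by lia.
  have njb : b != jo by apply/eqP => e; move: jb; rewrite e; lia.
  have ujo : u jo < u b.
    by have := IHu jo aj; rewrite !swapE tpermL tpermD.
  have ujoa : u jo < u a.
    have := hmid jo; rewrite aj jb => /(_ isT).
    have := neq_val u nij; lia.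
  have [] := frozen (b := b) (jj := jo) (y := u a) hch.
  - lia.
  - lia.
  - by rewrite swapE tpermR.
  - by rewrite swapE tpermD.
  - lia.
  move=> vb vj; have := hvj b jb; lia.
case: (eqVneq i b) => [eib|nib].
  subst i.
  have nxa : a != x by apply/eqP => e; move: ix ab; rewrite e; lia.
  have nxb : b != x by apply/eqP => e; move: ix; rewrite e; lia.
  have := IHu x ix; rewrite !swapE tpermR tpermD //; lia.
have ui : swap u a b i = u i by rewrite swapE tpermD // eq_sym.
rewrite /rlmax ui in IHu.
case: (eqVneq x a) => [exa|nxa].
  subst x; have := IHu b; rewrite swapE tpermR; apply; lia.
case: (eqVneq x b) => [exb|nxb].
  subst x.
  have nia' := neqn nia.
  case: (ltnP i a) => hia.
    by have := IHu a hia; rewrite swapE tpermL.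
  have hai : a < i by lia.
  have := IHu b ix; rewrite swapE tpermR => hb.
  have := hmid i; rewrite hai ix => /(_ isT).
  have := neq_val u nib; lia.
by have := IHu x ix; rewrite swapE tpermD // eq_sym.
Qed.


Lemma w0_rlmax n (i : 'I_n) : rlmax (w0 n) i.
Proof. by move=> x ix; rewrite /w0 !permE /=; have := ltn_ord x; lia. Qed.

Lemma prefix_vals n (w : 'S_n) (m : nat) :
  (forall i : 'I_n, i <= m -> rlmax w i) ->
  forall i : 'I_n, i <= m -> w i = n.-1 - i :> nat.
Proof.
move=> H.
suff: forall t (i : 'I_n), i = t :> nat -> i <= m -> w i = n.-1 - i :> nat.
  by move=> h i; apply: h.
elim/ltn_ind => t IH i eit im.
have wn := ltn_ord (w i); have iN := ltn_ord i.
have ub : w i <= n.-1 - i.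
  rewrite leqNgt; apply/negP => hgt.
  have xn : n.-1 - w i < n by have := ltn_ord i; lia.
  have := IH _ _ (Ordinal xn) erefl; rewrite /= => /(_ ltac:(lia)) /(_ ltac:(lia)) hx.
  have : w (Ordinal xn) = w i by apply: val_inj; rewrite /= hx; have := ltn_ord (w i); lia.
  move/perm_inj => /(congr1 (@nat_of_ord _)) /=; lia.
have zn : n.-1 - i < n by have := ltn_ord i; lia.
set z := ((w^-1)%g (Ordinal zn)).
have wz : w z = Ordinal zn by rewrite /z permKV.
case: (ltngtP z i) => hz.
- have := IH _ _ z erefl; rewrite wz /= => /(_ ltac:(lia)) /(_ ltac:(lia)).
  have := ltn_ord i; lia.
- have := H i im z hz; rewrite wz /=; lia.
- have ez : z = i by apply: val_inj.
  by move: wz; rewrite ez => ->.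
Qed.

Unset Implicit Arguments. Set Strict Implicit.

Theorem lemma5p11 (n : nat) (ks : seq nat) (k : nat) (w : 'S_n)
    (vs : seq 'S_n) :
  ks != [::] ->
  uniq ks ->
  all (fun x => 1 <= x <= n - 1) ks ->
  k \in ks -> (forall x, x \in ks -> k <= x) ->
  compatible vs ks ->
  head 1%g vs = w -> last 1%g vs = w0 n ->
  forall i : 'I_n, i.+1 <= k - 1 -> (w i).+1 = n + 1 - i.+1.
Proof.
move=> _ huniq hall hk hmin [hsz hch] hhead hlast.
have key : forall d s, s + d = size ks -> forall i : 'I_n,
    (forall t, s <= t < size ks -> i.+1 != nth 0 ks t) -> rlmax (nth 1%g vs s) i.
  elim=> [|d IH] s hs i hi.
    rewrite addn0 in hs; rewrite hs.
    have -> : size ks = (size vs).-1 by rewrite hsz.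
    by rewrite nth_last hlast; apply: w0_rlmax.
  have ss : s < size ks by lia.
  have [p hp] := hch s ss.
  set kk := nth 0 ks s in hp.
  have hkk : 1 <= kk <= n - 1 by apply: (all_nthP 0 hall).
  have jn : kk.-1 < n by lia.
  pose jo := Ordinal jn.
  have hjo : jo.+1 = kk by rewrite /=; lia.
  have IH1 := IH s.+1 ltac:(lia).
  apply: (main_chain hp hjo).
  - apply: IH1 => t /andP [st tk]; rewrite hjo /kk nth_uniq //; lia.
  - by apply: IH1 => t /andP [st tk]; apply: hi; lia.
  - apply/eqP => e; have := hi s; rewrite ss leqnn e hjo eqxx; by move/(_ isT).
move=> i hi.
have H0 : forall i' : 'I_n, i' <= i -> rlmax w i'.
  move=> i' hi'; rewrite -hhead -nth0; apply: (key (size ks) 0) => // t /andP [_ ht].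
  apply/eqP => e; have := hmin (nth 0 ks t) (mem_nth 0 ht); lia.
have := prefix_vals H0 (leqnn i); have := ltn_ord i; lia.
Qed.
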